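(* Let $M$ be a simple extended matrix with $n\geq 1$ rows, $m\geq 0$ left columns and $k\geq 1$ variables, $$M=\left[ \begin{array}{ccc|c} x_{11} & \cdots & x_{1m} & y_{1}\\ \vdots & & \vdots & \vdots\\ x_{n1} & \cdots & x_{nm} & y_{n}\end{array} \right].$$ The following are equivalent: (a) every finitely complete category with $M$-closed relations is a Mal'tsev category; (b) every variety with $M$-closed relations is a Mal'tsev variety; (c) there exist $i,i'\in\{1,\dots,n\}$ (not necessarily distinct) such that there is no $j\in\{1,\dots,m\}$ with $x_{ij}=y_i$ and $x_{i'j}=y_{i'}$.
   Context: A simple extended matrix $M$ (with parameters $n\geq 1$, $m\geq 0$, $k\geq 1$) is an $n\times(m+1)$ array as displayed, whose entries $x_{ij}$ and $y_i$ are (not necessarily distinct) variables from $\{x_1,\dots,x_k\}$. In a finitely complete category $\mathbb{C}$, an internal $n$-ary relation $r\colon R\rightarrowtail A^n$ (a monomorphism) is $M$-closed if for every object $B$ and every function $f\colon\{x_1,\dots,x_k\}\to\mathbb{C}(B,A)$ such that, for each $j\in\{1,\dots,m\}$, the morphism $(f(x_{1j}),\dots,f(x_{nj}))\colon B\to A^n$ factors through $r$, the morphism $(f(y_1),\dots,f(y_n))\colon B\to A^n$ also factors through $r$; $\mathbb{C}$ has $M$-closed relations if every internal $n$-ary relation is $M$-closed. (In a variety: for every subalgebra $R\subseteq A^n$ and every $f\colon\{x_1,\dots,x_k\}\to A$, if all columns $(f(x_{1j}),\dots,f(x_{nj}))$ lie in $R$ then $(f(y_1),\dots,f(y_n))\in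 R$.) Varieties are one-sorted finitary varieties of universal algebras. A Mal'tsev category is a finitely complete category in which every internal binary relation is difunctional; equivalently, it has $\mathsf{Mal}$-closed relations for the simple matrix $\mathsf{Mal}=\left[\begin{array}{ccc|c} x_1&x_2&x_2&x_1\\ x_1&x_1&x_2&x_2\end{array}\right]$. A Mal'tsev variety is a variety whose theory has a ternary term $p$ with $p(x,y,y)=x$ and $p(x,x,y)=y$ (equivalently, a variety that is a Mal'tsev category). *)

(* Defs.v *)
From mathcomp Require Import all_boot.
Set Implicit Arguments. Unset Strict Implicit. Unset Printing Implicit Defensive.

(*   entries x_{ij} = xs i j,  y_i = ys i, variables x_1..x_k = 'I_k.  *)

(* The matrix Mal = [x1 x2 x2 | x1 ; x1 x1 x2 | x2]  (n=2, m=3, k=2). *)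
Definition Mal_xs (i : 'I_2) (j : 'I_3) : 'I_2 :=
  if (i : nat) == 0 then (if (j : nat) == 0 then ord0 else ord_max)
  else (if (j : nat) == 2 then ord_max else ord0).
Definition Mal_ys (i : 'I_2) : 'I_2 := if (i : nat) == 0 then ord0 else ord_max.

(* Categories (hom-types with Leibniz equality).                       *)
Record category := Category {
  Ob :> Type;
  Hom : Ob -> Ob -> Type;
  comp : forall a b c, Hom b c -> Hom a b -> Hom a c;
  idm : forall a, Hom a a;
  comp_assoc : forall a b c d (h : Hom c d) (g : Hom b c) (f : Hom a b),
      comp h (comp g f) = comp (comp h g) f;
  comp_id_l : forall a b (f : Hom a b), comp (idm b) f = f;
  comp_id_r : forall a b (f : Hom a b), comp f (idm a) = f
}.
Arguments comp {c} {a b c0} : rename.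
Arguments Hom {c} : rename.

Section Cat.
Variable C : category.

Definition is_terminal (T : C) : Prop :=
  forall X : C, exists! f : Hom X T, True.

Definition is_pullback (X Y Z : C) (f : Hom X Z) (g : Hom Y Z)
    (P : C) (p1 : Hom P X) (p2 : Hom P Y) : Prop :=
  comp f p1 = comp g p2 /\
  forall (Q : C) (q1 : Hom Q X) (q2 : Hom Q Y), comp f q1 = comp g q2 ->
    exists! h : Hom Q P, comp p1 h = q1 /\ comp p2 h = q2.

Definition finitely_complete : Prop :=
  (exists T : C, is_terminal T) /\
  forall (X Y Z : C) (f : Hom X Z) (g : Hom Y Z),
    exists (P : C) (p1 : Hom P X) (p2 : Hom P Y), is_pullback f g p1 p2.

Definition is_power (n : nat) (A P : C) (pi : 'I_n -> Hom P A) : Prop :=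
  forall (Q : C) (q : 'I_n -> Hom Q A),
    exists! h : Hom Q P, forall i, comp (pi i) h = q i.

Definition mono (R P : C) (r : Hom R P) : Prop :=
  forall (X : C) (g h : Hom X R), comp r g = comp r h -> g = h.

Definition factors_through (n : nat) (A P R B : C) (pi : 'I_n -> Hom P A)
    (r : Hom R P) (g : 'I_n -> Hom B A) : Prop :=
  exists h : Hom B R, forall i, comp (pi i) (comp r h) = g i.

Definition M_closed (n m k : nat) (xs : 'I_n -> 'I_m -> 'I_k) (ys : 'I_n -> 'I_k)
    (A P R : C) (pi : 'I_n -> Hom P A) (r : Hom R P) : Prop :=
  forall (B : C) (f : 'I_k -> Hom B A),
    (forall j : 'I_m, factors_through pi r (fun i => f (xs i j))) ->
    factors_through pi r (fun i => f (ys i)).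

Definition has_M_closed_relations (n m k : nat)
    (xs : 'I_n -> 'I_m -> 'I_k) (ys : 'I_n -> 'I_k) : Prop :=
  forall (A P R : C) (pi : 'I_n -> Hom P A) (r : Hom R P),
    is_power pi -> mono r -> M_closed xs ys pi r.

(* Mal'tsev category: finitely complete, with Mal-closed relations
   (i.e. every internal binary relation is difunctional). *)
Definition malcev_category : Prop :=
  finitely_complete /\ has_M_closed_relations Mal_xs Mal_ys.
End Cat.

Record signature := Signature { Op : Type; arity : Op -> nat }.

Record algebra (S : signature) := Algebra {
  carrier :> Type;
  op : forall o : Op S, ('I_(arity o) -> carrier) -> carrier
}.
Arguments op {S} a o _ : rename.

Inductive term (S : signature) (X : Type) : Type :=
  | Var : X -> term S X
  | App : forall o : Op S, ('I_(arity o) -> term S X) -> term S X.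

Fixpoint eval (S : signature) (X : Type) (A : algebra S) (env : X -> A)
    (t : term S X) : A :=
  match t with
  | Var x => env x
  | App o args => op A o (fun l => @eval S X A env (args l))
  end.
Arguments eval {S X} A env t.

(* A variety is given by a signature S and a set E of equations
   (pairs of terms in countably many variables); its members are the
   models of E. *)
Definition equations (S : signature) := term S nat -> term S nat -> Prop.

Definition is_model (S : signature) (E : equations S) (A : algebra S) : Prop :=
  forall s t, E s t -> forall env : nat -> A, eval A env s = eval A env t.

Definition subalgebra_power (S : signature) (A : algebra S) (n : nat)
    (R : ('I_n -> A) -> Prop) : Prop :=
  forall (o : Op S) (a : 'I_(arity o) -> ('I_n -> A)),
    (forall l, R (a l)) -> R (fun i => op A o (fun l => a l i)).

Definition variety_has_M_closed_relations (S : signature) (E : equations S)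
    (n m k : nat) (xs : 'I_n -> 'I_m -> 'I_k) (ys : 'I_n -> 'I_k) : Prop :=
  forall A : algebra S, is_model E A ->
  forall R : ('I_n -> A) -> Prop, subalgebra_power R ->
  forall f : 'I_k -> A,
    (forall j : 'I_m, R (fun i => f (xs i j))) -> R (fun i => f (ys i)).

Definition env3 (T : Type) (a b c : T) (v : 'I_3) : T :=
  match (v : nat) with 0 => a | 1 => b | _ => c end.

Definition malcev_variety (S : signature) (E : equations S) : Prop :=
  exists p : term S 'I_3,
    forall A : algebra S, is_model E A -> forall x y : A,
      eval A (env3 x y y) p = x /\ eval A (env3 x x y) p = y.

(* Main.v *)
Require Import Defs.
From mathcomp Require Import all_boot.
From Stdlib Require Import ProofIrrelevance FunctionalExtensionality PropExtensionality ClassicalEpsilon Classical.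
Set Implicit Arguments. Unset Strict Implicit. Unset Printing Implicit Defensive.

Lemma sig_eq (A : Type) (P : A -> Prop) (x y : {a : A | P a}) :
  proj1_sig x = proj1_sig y -> x = y.
Proof. case: x => a pa; case: y => b pb /= E; subst b; f_equal; apply: proof_irrelevance. Qed.

Definition pickx (A : Type) (P : A -> Prop) (H : exists x, P x) : A :=
  proj1_sig (constructive_indefinite_description _ H).
Lemma pickxP (A : Type) (P : A -> Prop) (H : exists x, P x) : P (pickx H).
Proof. exact: proj2_sig (constructive_indefinite_description _ H). Qed.

Section BP.
Variables (T : Type) (m : T -> T -> T -> T).
Hypotheses (h1 : forall a b, m a a b = a) (h2 : forall a b, m a b a = a)
  (h3 : forall a b, m b a a = a).
Variables (n : nat) (R : ('I_n -> T) -> Prop).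
Hypothesis Rm : forall r1 r2 r3, R r1 -> R r2 -> R r3 -> R (fun i => m (r1 i) (r2 i) (r3 i)).
Variables (y : 'I_n -> T) (i0 : 'I_n).
Hypothesis H2 : forall i i', exists r, R r /\ r i = y i /\ r i' = y i'.

Lemma BP_list N : forall l : seq 'I_n, size l <= N ->
  exists r, R r /\ (forall i, i \in l -> r i = y i).
Proof.
elim: N => [|N IH] l.
  case: l => // _. have [r [Rr _]] := H2 i0 i0. by exists r.
case: l => [|a [|b [|c rest]]] /= Hs.
- have [r [Rr _]] := H2 i0 i0. by exists r.
- have [r [Rr [E _]]] := H2 a a. exists r; split=> // i; rewrite inE => /eqP->.
  exact: E.
- have [r [Rr [Ea Eb]]] := H2 a b. exists r; split=> // i.
  by rewrite !inE => /orP[]/eqP->.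
- have [r1 [R1 E1]] := IH (b :: c :: rest) Hs.
  have [r2 [R2 E2]] := IH (a :: c :: rest) Hs.
  have [r3 [R3 E3]] := IH (a :: b :: rest) Hs.
  exists (fun i => m (r1 i) (r2 i) (r3 i)); split; first exact: Rm.
  move=> i Hi.
  case: (boolP (i == a)) => [/eqP->|Ha].
    by rewrite (E2 a) ?mem_head // (E3 a) ?mem_head // h3.
  have Hi1 : i \in b :: c :: rest by move: Hi; rewrite inE (negbTE Ha).
  rewrite (E1 i Hi1).
  case: (boolP (i == b)) => [/eqP->|Hb].
    by rewrite (E3 b) ?h2 // !inE eqxx orbT.
  have Hi2 : i \in c :: rest by move: Hi1; rewrite inE (negbTE Hb).
  rewrite (E2 i); last by rewrite inE Hi2 orbT.
  case: (boolP (i == c)) => [/eqP->|Hc]; first by rewrite h1.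
  have Hi3 : i \in rest by move: Hi2; rewrite inE (negbTE Hc).
  by rewrite (E3 i) ?h1 // !inE Hi3 !orbT.
Qed.

Lemma BP : R y.
Proof.
have [r [Rr E]] := BP_list (leqnn (size (enum 'I_n))).
have -> : y = r by apply: functional_extensionality => i; rewrite E // mem_enum.
exact: Rr.
Qed.
End BP.
Definition o3_0 : 'I_3 := @Ordinal 3 0 isT.
Definition o3_1 : 'I_3 := @Ordinal 3 1 isT.
Definition o3_2 : 'I_3 := @Ordinal 3 2 isT.





Definition MajSig : signature := Signature (fun _ : unit => 3).
Definition t3 (a b c : term MajSig nat) : term MajSig nat :=
  @App MajSig nat tt (fun l => env3 a b c l).
Definition MajE : equations MajSig := fun s t =>
  t = Var MajSig 0 /\
  (s = t3 (Var _ 0) (Var _ 0) (Var _ 1) \/ s = t3 (Var _ 0) (Var _ 1) (Var _ 0)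
   \/ s = t3 (Var _ 1) (Var _ 0) (Var _ 0)).

Section MajModel.
Variable A : algebra MajSig.
Hypothesis HA : is_model MajE A.
Definition mA (a b c : A) : A := op A tt (env3 a b c).

Let envab (a b : A) (x : nat) : A := if x is 0 then a else b.

Lemma eval_t3 (env : nat -> A) (u v w : nat) :
  eval A env (t3 (Var _ u) (Var _ v) (Var _ w)) = mA (env u) (env v) (env w).
Proof.
rewrite /mA /=; congr (op A tt); apply: functional_extensionality => l.
by case: l => [[|[|?]] ?].
Qed.

Lemma mA1 a b : mA a a b = a.
Proof.
have := HA (conj erefl (or_introl erefl)) (envab a b).
by rewrite eval_t3.
Qed.
Lemma mA2 a b : mA a b a = a.
Proof.
have := HA (conj erefl (or_intror (or_introl erefl))) (envab a b).
by rewrite eval_t3.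
Qed.
Lemma mA3 a b : mA b a a = a.
Proof.
have := HA (conj erefl (or_intror (or_intror erefl))) (envab a b).
by rewrite eval_t3.
Qed.
End MajModel.

Lemma maj_var_closed n m k (xs : 'I_n -> 'I_m -> 'I_k) (ys : 'I_n -> 'I_k) (i0 : 'I_n)
  (H : forall i i', exists j, xs i j = ys i /\ xs i' j = ys i') :
  variety_has_M_closed_relations MajE xs ys.
Proof.
move=> A HA R HR f Hc.
apply: (BP (mA1 HA) (mA2 HA) (mA3 HA) _ i0).
- move=> r1 r2 r3 R1 R2 R3.
  have := HR tt (fun l => env3 r1 r2 r3 l).
  have -> : (fun i => op A tt (fun l => env3 r1 r2 r3 l i)) =
            (fun i => mA (r1 i) (r2 i) (r3 i)).
    apply: functional_extensionality => i; rewrite /mA; congr (op A tt).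
    by apply: functional_extensionality => l; case: l => [[|[|?]] ?].
  apply=> l; by case: l => [[|[|?]] ?].
- move=> i i'; have [j [E1 E2]] := H i i'.
  by exists (fun i => f (xs i j)); rewrite E1 E2.
Qed.

Definition maj (a b c : bool) := (a && b) || (b && c) || (a && c).
Definition BoolMaj : algebra MajSig :=
  @Algebra MajSig bool (fun _ args => maj (args o3_0) (args o3_1) (args o3_2)).

Lemma BoolMaj_model : is_model MajE BoolMaj.
Proof.
move=> s t [-> [->|[->|->]]] env /=; by case: (env 0); case: (env 1).
Qed.

Lemma eval_mono (X : Type) (e1 e2 : X -> bool) (He : forall x, e1 x ==> e2 x)
  (t : term MajSig X) : eval BoolMaj e1 t ==> eval BoolMaj e2 t.
Proof.
elim: t => [x|o a IH] /=; first exact: He.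
move: (IH o3_0) (IH o3_1) (IH o3_2); rewrite /maj.
case: (eval BoolMaj e1 (a o3_0)); case: (eval BoolMaj e1 (a o3_1));
case: (eval BoolMaj e1 (a o3_2)); case: (eval BoolMaj e2 (a o3_0));
case: (eval BoolMaj e2 (a o3_1)); by case: (eval BoolMaj e2 (a o3_2)).
Qed.

Lemma MajE_not_malcev : ~ malcev_variety MajE.
Proof.
case=> p Hp.
have [E1 _] := Hp _ BoolMaj_model false true.
have [_ E2] := Hp _ BoolMaj_model false true.
have HE : forall x : 'I_3, env3 false false true x ==> env3 false true true x.
  by move=> [[|[|[|?]]] ?].
have := @eval_mono _ _ _ HE p.
move: E1 E2 => /= -> -> //.
Qed.

Fixpoint subst (S : signature) (X Y : Type) (s : X -> term S Y) (t : term S X) : term S Y :=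
  match t with
  | Var x => s x
  | App o a => App (fun l => subst s (a l))
  end.

Lemma eval_subst (S : signature) (X Y : Type) (A : algebra S) (s : X -> term S Y)
  (env : Y -> A) t : eval A env (subst s t) = eval A (fun x => eval A env (s x)) t.
Proof.
elim: t => [x|o a IH] //=; congr (op A o); apply: functional_extensionality => l.
exact: IH.
Qed.

Section Free.
Variables (S : signature) (E : equations S) (k : nat).

Definition equivT (t s : term S 'I_k) : Prop :=
  forall A : algebra S, is_model E A -> forall env, eval A env t = eval A env s.

Lemma equivT_App o (a b : 'I_(arity o) -> term S 'I_k) :
  (forall l, equivT (a l) (b l)) -> equivT (App a) (App b).
Proof.
move=> H A HA env /=; congr (op A o); apply: functional_extensionality => l.
exact: H.
Qed.

Definition Fcar := {P : term S 'I_k -> Prop | exists t, P = equivT t}.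
Definition cls (t : term S 'I_k) : Fcar := exist _ (equivT t) (ex_intro _ t erefl).
Definition rep (c : Fcar) : term S 'I_k := pickx (proj2_sig c).

Lemma cls_eq t s : equivT t s -> cls t = cls s.
Proof.
move=> H; apply: sig_eq => /=.
apply: functional_extensionality => u; apply: propositional_extensionality.
split=> H' A HA env; first by rewrite -(H A HA env) (H' A HA env).
by rewrite (H A HA env) (H' A HA env).
Qed.

Lemma cls_rep c : cls (rep c) = c.
Proof.
apply: sig_eq => /=; rewrite /rep; exact: (esym (pickxP (proj2_sig c))).
Qed.

Lemma rep_cls t : equivT (rep (cls t)) t.
Proof.
have Hp := pickxP (proj2_sig (cls t)). rewrite /= in Hp.
have : equivT t t by [].
by rewrite Hp.
Qed.

Definition Falg : algebra S :=
  @Algebra S Fcar (fun o args => cls (App (fun l => rep (args l)))).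

Lemma eval_F (env : 'I_k -> Falg) t :
  eval Falg env t = cls (subst (fun x => rep (env x)) t).
Proof.
elim: t => [x|o a IH] /=; first by rewrite cls_rep.
apply: cls_eq; apply: equivT_App => l; rewrite IH; exact: rep_cls.
Qed.

Lemma eval_F_nat (env : nat -> Falg) t :
  eval Falg env t = cls (subst (fun x => rep (env x)) t).
Proof.
elim: t => [x|o a IH] /=; first by rewrite cls_rep.
apply: cls_eq; apply: equivT_App => l; rewrite IH; exact: rep_cls.
Qed.

Lemma Falg_model : is_model E Falg.
Proof.
move=> s t Est env; rewrite !eval_F_nat; apply: cls_eq => A HA e.
rewrite !eval_subst; exact: HA.
Qed.

Lemma eval_rep_cls A (HA : is_model E A) env t : eval A env (rep (cls t)) = eval A env t.
Proof. exact: rep_cls. Qed.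

End Free.

Lemma c_to_b (S : signature) (E : equations S) n m k
  (xs : 'I_n -> 'I_m -> 'I_k) (ys : 'I_n -> 'I_k) (i0 i1 : 'I_n)
  (Hno : ~ (exists j, xs i0 j = ys i0 /\ xs i1 j = ys i1)) :
  variety_has_M_closed_relations E xs ys -> malcev_variety E.
Proof.
move=> HM.
pose al (v : 'I_k) := v != ys i0.
pose be (v : 'I_k) := v == ys i1.
pose R := fun r : 'I_n -> Falg E k => exists s : term S 'I_3,
  forall A, is_model E A -> forall a b : A,
    eval A (env3 a b b) s = eval A (fun v => if al v then b else a) (rep (r i0)) /\
    eval A (env3 a a b) s = eval A (fun v => if be v then b else a) (rep (r i1)).
have HR : subalgebra_power R.
  move=> o args Ha.
  pose sf l := pickx (Ha l).
  exists (App sf) => A HA a b /=.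
  rewrite !eval_rep_cls //=; split; congr (op A o);
    apply: functional_extensionality => l; by case: (pickxP (Ha l) A HA a b).
have := HM _ (@Falg_model S E k) R HR (fun v => @cls S E k (Var S v)).
case.
- move=> j.
  case Ha : (al (xs i0 j)); case Hb : (be (xs i1 j)).
  + exists (Var _ o3_2) => A HA a b; rewrite !eval_rep_cls //= Ha Hb. by [].
  + exists (Var _ o3_1) => A HA a b; rewrite !eval_rep_cls //= Ha Hb. by [].
  + exfalso; apply: Hno; exists j; move: Ha Hb; rewrite /al /be.
    by move/negbFE/eqP => -> /eqP ->.
  + exists (Var _ o3_0) => A HA a b; rewrite !eval_rep_cls //= Ha Hb. by [].
- move=> s Hs; exists s => A HA x y.
  have [E1 E2] := Hs A HA x y.
  rewrite E1 E2 !eval_rep_cls //=. by rewrite /al /be !eqxx.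
Qed.

Record majalg := MajAlg {
  mc :> Type;
  mm : mc -> mc -> mc -> mc;
  mm1 : forall a b, mm a a b = a;
  mm2 : forall a b, mm a b a = a;
  mm3 : forall a b, mm b a a = a }.

Definition ishom (X Y : majalg) (h : X -> Y) : Prop :=
  forall a b c, h (mm a b c) = mm (h a) (h b) (h c).
Definition mhom (X Y : majalg) := {h : X -> Y | ishom h}.

Definition mkh (X Y : majalg) (h : X -> Y) (p : ishom h) : mhom X Y := exist (@ishom X Y) h p.

Definition mcomp (X Y Z : majalg) (g : mhom Y Z) (f : mhom X Y) : mhom X Z.
Proof.
exists (fun x => proj1_sig g (proj1_sig f x)).
move=> a b c; by rewrite (proj2_sig f) (proj2_sig g).
Defined.
Definition mid (X : majalg) : mhom X X := exist (@ishom X X) (fun x => x) (fun _ _ _ => erefl).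

Lemma mhom_ext X Y (f g : mhom X Y) : (forall x, proj1_sig f x = proj1_sig g x) -> f = g.
Proof. move=> H; apply: sig_eq; exact: functional_extensionality. Qed.

Definition MajCat : category.
Proof.
refine (@Category majalg mhom mcomp mid _ _ _); by move=> *; apply: mhom_ext.
Defined.

Definition unitM : majalg := @MajAlg unit (fun _ _ _ => tt) (fun a _ => match a with tt => erefl end)
  (fun a _ => match a with tt => erefl end) (fun a _ => match a with tt => erefl end).

Definition pt (X : majalg) (x : X) : mhom unitM X :=
  exist (@ishom unitM X) (fun _ => x) (fun _ _ _ => esym (mm1 x x)).

Section PB.
Variables (X Y Z : majalg) (f : mhom X Z) (g : mhom Y Z).
Definition pbT := {p : X * Y | proj1_sig f p.1 = proj1_sig g p.2}.
Definition pbm (p q r : pbT) : pbT.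
Proof.
exists (mm (proj1_sig p).1 (proj1_sig q).1 (proj1_sig r).1,
        mm (proj1_sig p).2 (proj1_sig q).2 (proj1_sig r).2) => /=.
by rewrite (proj2_sig f) (proj2_sig g) (proj2_sig p) (proj2_sig q) (proj2_sig r).
Defined.
Definition pbA : majalg.
Proof.
refine (@MajAlg pbT pbm _ _ _) => a b; apply: sig_eq => /=;
  by rewrite ?mm1 ?mm2 ?mm3 -?surjective_pairing.
Defined.
Definition pb1 : mhom pbA X := @mkh (pbA) X (fun p => (proj1_sig p).1) (fun _ _ _ => erefl).
Definition pb2 : mhom pbA Y := @mkh (pbA) Y (fun p => (proj1_sig p).2) (fun _ _ _ => erefl).
End PB.

Lemma MajCat_fc : finitely_complete MajCat.
Proof.
split.
  exists unitM => X; exists (@mkh X unitM (fun _ => tt) (fun _ _ _ => erefl)).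
  split=> // h _; apply: mhom_ext => x /=; by case: (proj1_sig h x).
move=> X Y Z f g; exists (pbA f g), (pb1 f g), (pb2 f g); split.
  apply: mhom_ext => p /=; exact: (proj2_sig p).
move=> Q q1 q2 Hq.
have H x : proj1_sig f (proj1_sig q1 x) = proj1_sig g (proj1_sig q2 x).
  exact: (f_equal (fun h : mhom Q Z => proj1_sig h x) Hq).
have hh : ishom (X:=Q) (Y:=pbA f g) (fun x => exist _ (proj1_sig q1 x, proj1_sig q2 x) (H x)).
  move=> a b c; apply: sig_eq => /=; by rewrite (proj2_sig q1) (proj2_sig q2).
exists (exist _ _ hh); split; first by split; apply: mhom_ext.
move=> h' [E1 E2]; apply: mhom_ext => x; apply: sig_eq => /=.
rewrite -E1 -E2 /=; by case: (sval (sval h' x)).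
Qed.

Lemma MajCat_closed n m k (xs : 'I_n -> 'I_m -> 'I_k) (ys : 'I_n -> 'I_k) (i0 : 'I_n)
  (H : forall i i', exists j, xs i j = ys i /\ xs i' j = ys i') :
  has_M_closed_relations MajCat xs ys.
Proof.
move=> A P R pi r Hpow Hmono B f Hc.
have inj : forall rho rho' : R,
    (forall i, proj1_sig (pi i) (proj1_sig r rho) = proj1_sig (pi i) (proj1_sig r rho')) ->
    rho = rho'.
  move=> rho rho' Hi.
  have [h [_ Hu]] := Hpow unitM (fun i => pt (proj1_sig (pi i) (proj1_sig r rho))).
  have e1 : h = @Defs.comp MajCat _ _ _ r (pt rho) by apply: Hu => i; apply: mhom_ext.
  have e2 : h = @Defs.comp MajCat _ _ _ r (pt rho').
    by apply: Hu => i; apply: mhom_ext => x /=; rewrite Hi.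
  have := Hmono unitM (pt rho) (pt rho') (etrans (esym e1) e2).
  by move/(f_equal (fun h : mhom unitM R => proj1_sig h tt)).
pose Rel (t : 'I_n -> A) := exists rho : R, forall i, proj1_sig (pi i) (proj1_sig r rho) = t i.
have HB : forall b : B, Rel (fun i => proj1_sig (f (ys i)) b).
  move=> b; apply: (BP (@mm1 A) (@mm2 A) (@mm3 A) _ i0).
  - move=> r1 r2 r3 [p1 E1] [p2 E2] [p3 E3]; exists (mm p1 p2 p3) => i.
    by rewrite (proj2_sig r) (proj2_sig (pi i)) E1 E2 E3.
  - move=> i i'; have [j [Ej Ej']] := H i i'.
    have [h Hh] := Hc j.
    exists (fun i => proj1_sig (f (xs i j)) b); rewrite Ej Ej'; split=> //.
    exists (proj1_sig h b) => l.
    exact: (f_equal (fun g : mhom B A => proj1_sig g b) (Hh l)).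
pose hf b := pickx (HB b).
have hfP b i : proj1_sig (pi i) (proj1_sig r (hf b)) = proj1_sig (f (ys i)) b.
  exact: (pickxP (HB b)).
have hh : ishom (X:=B) (Y:=R) hf.
  move=> a b c; apply: inj => i.
  by rewrite hfP !(proj2_sig r, proj2_sig (pi i)) !hfP (proj2_sig (f (ys i))).
exists (exist _ hf hh) => i; apply: mhom_ext => b /=; exact: hfP.
Qed.

Definition majc (a b c : bool) := (a && b) || (b && c) || (a && c).
Definition boolM : majalg.
Proof. refine (@MajAlg bool majc _ _ _); by do 2 case. Defined.
Definition bool2M : majalg.
Proof.
refine (@MajAlg (bool * bool) (fun p q r => (majc p.1 q.1 r.1, majc p.2 q.2 r.2)) _ _ _);
 by move=> [[] []] [[] []].
Defined.
Definition geT := {p : bool * bool | p.2 ==> p.1}.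
Definition gem (p q r : geT) : geT.
Proof.
exists (majc (proj1_sig p).1 (proj1_sig q).1 (proj1_sig r).1,
        majc (proj1_sig p).2 (proj1_sig q).2 (proj1_sig r).2).
by move: p q r => [[[] []] Hp] [[[] []] Hq] [[[] []] Hr].
Defined.
Definition geM : majalg.
Proof.
refine (@MajAlg geT gem _ _ _);
 by move=> a b; apply: sig_eq; move: a b => [[[] []] ?] [[[] []] ?].
Defined.

Lemma I2_cases (i : 'I_2) : i = ord0 \/ i = ord_max.
Proof. case: i => [[|[|?]] Hi]; [left|right|by []]; exact: val_inj. Qed.

Lemma MajCat_not_malcev : ~ has_M_closed_relations MajCat Mal_xs Mal_ys.
Proof.
move=> HM.
pose pi (i : 'I_2) : mhom bool2M boolM :=
  if (i : nat) == 0 then @mkh bool2M boolM (fun p : bool * bool => p.1) (fun _ _ _ => erefl)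
  else @mkh bool2M boolM (fun p : bool * bool => p.2) (fun _ _ _ => erefl).
pose r : mhom geM bool2M := @mkh geM bool2M (fun p : geT => proj1_sig p) (fun _ _ _ => erefl).
have Hpow : is_power (C:=MajCat) pi.
  move=> Q q.
  have hh : ishom (X:=Q) (Y:=bool2M) (fun x => (proj1_sig (q ord0) x, proj1_sig (q ord_max) x)).
    by move=> a b c /=; rewrite !(proj2_sig (q _)).
  exists (exist _ _ hh); split.
    by move=> i; case: (I2_cases i) => ->; apply: mhom_ext.
  move=> h' Hh; apply: mhom_ext => x /=.
  rewrite -(Hh ord0) -(Hh ord_max) /=; by case: (sval h' x).
have Hmono : mono (C:=MajCat) r.
  move=> X g h E; apply: mhom_ext => x; apply: sig_eq.
  exact: (f_equal (fun h : mhom X bool2M => proj1_sig h x) E).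
pose f (i : 'I_2) : mhom unitM boolM := @pt boolM (if (i : nat) == 0 then false else true).
have := HM boolM bool2M geM pi r Hpow Hmono unitM f.
case.
- move=> j.
  have : exists p : geT, proj1_sig p = (Mal_xs ord0 j != ord0, Mal_xs ord_max j != ord0).
    case: j => [[|[|[|?]]] ?] //.
    + by exists (exist _ (false, false) isT).
    + by exists (exist _ (true, false) isT).
    + by exists (exist _ (true, true) isT).
  case=> p Hp; exists (@pt geM p) => i; apply: mhom_ext => x /=.
  case: (I2_cases i) => -> /=; rewrite Hp /f /=.
  + by case: (Mal_xs ord0 j) => [[|[|?]] ?].
  + by case: (Mal_xs ord_max j) => [[|[|?]] ?].
- move=> h Hh.
  have e0 := f_equal (fun g : mhom unitM boolM => proj1_sig g tt) (Hh ord0).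
  have e1 := f_equal (fun g : mhom unitM boolM => proj1_sig g tt) (Hh ord_max).
  move: e0 e1 => /= e0 e1.
  have := proj2_sig (proj1_sig h tt).
  by rewrite e0 e1.
Qed.

Section GenCat.
Variable C : category.
Hypothesis HC : finitely_complete C.

Local Notation cmp := (@Defs.comp C _ _ _).

Lemma term_unique (T : C) (HT : is_terminal T) (X : C) (f g : Hom X T) : f = g.
Proof. have [h [_ Hu]] := HT X. by rewrite -(Hu f I) -(Hu g I). Qed.

Lemma has_prod (X Y : C) : exists (Pr : C) (p1 : Hom Pr X) (p2 : Hom Pr Y),
  forall (Q : C) (q1 : Hom Q X) (q2 : Hom Q Y),
    exists! h : Hom Q Pr, cmp p1 h = q1 /\ cmp p2 h = q2.
Proof.
have [[T HT] Hpb] := HC.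
have [tX _] := HT X. have [tY _] := HT Y.
have [P [p1 [p2 [_ Hu]]]] := Hpb _ _ _ tX tY.
exists P, p1, p2 => Q q1 q2; apply: Hu; exact: term_unique.
Qed.

Lemma has_power (X : C) n : exists (P : C) (pi : 'I_n -> Hom P X), is_power pi.
Proof.
elim: n => [|n [P [pi Hp]]].
  have [[T HT] _] := HC.
  have f0 : 'I_0 -> Hom T X by case.
  exists T, f0 => Q q; have [h [_ Hu]] := HT Q.
  exists h; split; first by case.
  move=> h' _; exact: term_unique.
have [Pr [p1 [p2 Hpr]]] := has_prod P X.
pose pi' (i : 'I_n.+1) : Hom Pr X :=
  match unlift ord_max i with Some i' => cmp (pi i') p1 | None => p2 end.
exists Pr, pi' => Q q.
have [hn [Hhn Uhn]] := Hp Q (fun i' => q (lift ord_max i')).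
have [h [[E1 E2] Uh]] := Hpr Q hn (q ord_max).
exists h; split.
  move=> i; rewrite /pi'; case: unliftP => [j|] ->.
    by rewrite -comp_assoc E1 Hhn.
  exact: E2.
move=> h' H'.
have e1 : hn = cmp p1 h'.
  apply: Uhn => i'; have := H' (lift ord_max i'); rewrite /pi' liftK.
  by rewrite comp_assoc.
apply: Uh; split; first by rewrite -e1.
by have := H' ord_max; rewrite /pi' unlift_none.
Qed.

End GenCat.

Lemma c_to_a (C : category) n m k
  (xs : 'I_n -> 'I_m -> 'I_k) (ys : 'I_n -> 'I_k) (i0 i1 : 'I_n)
  (Hno : ~ (exists j, xs i0 j = ys i0 /\ xs i1 j = ys i1)) :
  finitely_complete C -> has_M_closed_relations C xs ys -> malcev_category C.
Proof.
move=> HC HM; split=> // A P R pi r Hpow Hmono B f Hcols.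
have [A2 [p1 [p2 Hprod]]] := has_prod HC A A.
have [P' [pi' Hpow']] := has_power HC A2 n.
have [phi [Hphi _]] := Hpow P' (fun i => if (i : nat) == 0 then Defs.comp p1 (pi' i0)
                                        else Defs.comp p2 (pi' i1)).
have Hphi0 : Defs.comp (pi ord0) phi = Defs.comp p1 (pi' i0) by exact: Hphi ord0.
have Hphi1 : Defs.comp (pi ord_max) phi = Defs.comp p2 (pi' i1) by exact: Hphi ord_max.
have [R' [s [r' [Hcomm Hpb]]]] := HC.2 _ _ _ r phi.
have Hmono' : mono r'.
  move=> X g h E.
  have Es : Defs.comp s g = Defs.comp s h.
    apply: Hmono; rewrite !comp_assoc Hcomm -!comp_assoc.
    by rewrite E.
  have Hq : Defs.comp r (Defs.comp s g) = Defs.comp phi (Defs.comp r' g).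
    by rewrite !comp_assoc Hcomm.
  have [m0 [_ Um]] := Hpb X _ _ Hq.
  by rewrite -(Um g) ?(Um h) // Es E.
pose x1 := f ord0. pose x2 := f ord_max.
pose al (v : 'I_k) := v != ys i0.
pose be (v : 'I_k) := v == ys i1.
have Hex : forall v, exists h : Hom B A2,
    Defs.comp p1 h = (if al v then x2 else x1) /\ Defs.comp p2 h = (if be v then x2 else x1).
  move=> v; have [h [Hh _]] := Hprod B (if al v then x2 else x1) (if be v then x2 else x1).
  by exists h.
pose f' v := pickx (Hex v).
have Hf' v := pickxP (Hex v).
have := HM A2 P' R' pi' r' Hpow' Hmono' B f'.
case.
- move=> j.
  have [g [Hg _]] := Hpow' B (fun i => f' (xs i j)).
  have [jj [Ej0 Ej1]] : exists jj : 'I_3,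
      (if al (xs i0 j) then x2 else x1) = f (Mal_xs ord0 jj) /\
      (if be (xs i1 j) then x2 else x1) = f (Mal_xs ord_max jj).
    case Ha : (al (xs i0 j)); case Hb : (be (xs i1 j)).
    + by exists o3_2.
    + by exists o3_1.
    + exfalso; apply: Hno; exists j; move: Ha Hb; rewrite /al /be.
      by move/negbFE/eqP => -> /eqP ->.
    + by exists o3_0.
  have [h0 Hh0] := Hcols jj.
  have Eq : Defs.comp r h0 = Defs.comp phi g.
    have [u [_ Uu]] := Hpow B (fun i => f (Mal_xs i jj)).
    rewrite -(Uu _ Hh0); apply: Uu => i.
    case: (I2_cases i) => ->.
    + rewrite comp_assoc Hphi0 -comp_assoc (Hg i0).
      by case: (Hf' (xs i0 j)) => -> _.
    + rewrite comp_assoc Hphi1 -comp_assoc (Hg i1).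
      by case: (Hf' (xs i1 j)) => _ ->.
  have [kk [[_ Ek] _]] := Hpb B _ _ Eq.
  exists kk => i; by rewrite Ek Hg.
- move=> kk Hk; exists (Defs.comp s kk) => i.
  have Er : Defs.comp r (Defs.comp s kk) = Defs.comp phi (Defs.comp r' kk).
    by rewrite !comp_assoc Hcomm.
  rewrite Er.
  case: (I2_cases i) => ->.
  + rewrite comp_assoc Hphi0 -comp_assoc (Hk i0).
    by case: (Hf' (ys i0)) => -> _; rewrite /al eqxx.
  + rewrite comp_assoc Hphi1 -comp_assoc (Hk i1).
    by case: (Hf' (ys i1)) => _ ->; rewrite /be eqxx.
Qed.

Theorem corollary2p4 (n m k : nat) (hn : 1 <= n) (hk : 1 <= k)
    (xs : 'I_n -> 'I_m -> 'I_k) (ys : 'I_n -> 'I_k) :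
  ((forall C : category, finitely_complete C ->
      has_M_closed_relations C xs ys -> malcev_category C) <->
   (forall (S : signature) (E : equations S),
      variety_has_M_closed_relations E xs ys -> malcev_variety E)) /\
  ((forall (S : signature) (E : equations S),
      variety_has_M_closed_relations E xs ys -> malcev_variety E) <->
   (exists i i' : 'I_n,
      ~ (exists j : 'I_m, xs i j = ys i /\ xs i' j = ys i'))).
Proof.
pose i0 : 'I_n := Ordinal hn.
have negc : ~ (exists i i' : 'I_n, ~ (exists j : 'I_m, xs i j = ys i /\ xs i' j = ys i')) ->
    forall i i', exists j, xs i j = ys i /\ xs i' j = ys i'.
  move=> H i i'; apply: NNPP => H'; apply: H; by exists i, i'.
have cb : (exists i i' : 'I_n, ~ (exists j : 'I_m, xs i j = ys i /\ xs i' j = ys i')) ->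
    forall (S : signature) (E : equations S),
      variety_has_M_closed_relations E xs ys -> malcev_variety E.
  move=> [i [i' H]] S E; exact: c_to_b H.
have ca : (exists i i' : 'I_n, ~ (exists j : 'I_m, xs i j = ys i /\ xs i' j = ys i')) ->
    forall C : category, finitely_complete C ->
      has_M_closed_relations C xs ys -> malcev_category C.
  move=> [i [i' H]] C; exact: c_to_a H.
have bc : (forall (S : signature) (E : equations S),
      variety_has_M_closed_relations E xs ys -> malcev_variety E) ->
    (exists i i' : 'I_n, ~ (exists j : 'I_m, xs i j = ys i /\ xs i' j = ys i')).
  move=> Hb; apply: NNPP => Hn.
  apply: MajE_not_malcev; apply: Hb.
  exact: maj_var_closed i0 (negc Hn).
have ac : (forall C : category, finitely_complete C ->
      has_M_closed_relations C xs ys -> malcev_category C) ->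
    (exists i i' : 'I_n, ~ (exists j : 'I_m, xs i j = ys i /\ xs i' j = ys i')).
  move=> Ha; apply: NNPP => Hn.
  apply: MajCat_not_malcev.
  by have [_ H] := Ha MajCat MajCat_fc (MajCat_closed i0 (negc Hn)).
split; split.
- by move=> Ha; apply: cb; apply: ac.
- by move=> Hb; apply: ca; apply: bc.
- exact: bc.
- exact: cb.
Qed.
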